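(* Let $D$ be a Dyck path of semilength $n$ and $\pi$ the permutation associated with $D$ by the Billey–Jockusch–Stanley bijection. Then for $k\in\{1,\dots,n\}$, $\pi(k)=k$ if and only if $D$ has no valley at any position $(i,j)$ with $i\le k$ and $j\ge k$.
   Context: Work in an $n\times n$ array of unit cells; the cell $(i,j)$ is the one in column $i$ (columns numbered $1,\dots,n$ from left to right) and row $j$ (rows numbered $1,\dots,n$ from bottom to top), i.e. the square $[i-1,i]\times[j-1,j]$. A Dyck path of semilength $n$ is a lattice path from $(0,0)$ to $(n,n)$ with unit north and east steps that never goes below the line $y=x$. A valley of $D$ is an east step immediately followed by a north step; if the east step is the $k$-th east step and the north step is the $\ell$-th north step of $D$, the valley is said to be at position $(k,\ell)$, namely the cell enclosed by these two steps. Billey–Jockusch–Stanley bijection: put a cross in every valley cell of $D$; then, for the columns $i=1,2,\dots,n$ in this order, if column $i$ does not yet contain a cross, put a cross in the lowest cell of column $i$whose row does not yet contain a cross. The crosses form a permutation matrix, and $\pi(i)$ is the row of the cross in column $i$. *)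

(* Defs.v *)
From mathcomp Require Import all_boot.
Set Implicit Arguments. Unset Strict Implicit. Unset Printing Implicit Defensive.

(* A lattice path is a sequence of steps: true = north step, false = east step. *)

Definition dyck (n : nat) (D : seq bool) : bool :=
  [&& size D == n.*2, count id D == n &
      all (fun m => count negb (take m D) <= count id (take m D))
          (iota 0 (size D).+1)].

(* The valley is at position (k, l) where the east
   step is the k-th east step and the north step is the l-th north step. *)
Definition valleys (D : seq bool) : seq (nat * nat) :=
  [seq (count negb (take p.+1 D), count id (take p.+2 D))
  | p <- iota 0 (size D).-1
  & (nth true D p == false) && (nth false D p.+1 == true)].

(* Billey-Jockusch-Stanley construction, columns processed in order.
   V = valley cells, used = rows already containing a cross. *)
Fixpoint bjs_aux (n : nat) (V : seq (nat * nat)) (cols : seq nat)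
    (used : seq nat) : seq nat :=
  match cols with
  | [::] => [::]
  | i :: cs =>
      match [seq v.2 | v <- V & v.1 == i] with
      | r :: _ => r :: bjs_aux n V cs used
      | [::] =>
          let r := head 0 [seq r <- iota 1 n | r \notin used] in
          r :: bjs_aux n V cs (r :: used)
      end
  end.

Definition bjs (n : nat) (D : seq bool) : seq nat :=
  bjs_aux n (valleys D) (iota 1 n) (map snd (valleys D)).

Definition bjs_perm (n : nat) (D : seq bool) (k : nat) : nat :=
  nth 0 (bjs n D) k.-1.

(* Main.v *)
Require Import Defs.
From mathcomp Require Import all_boot zify.
Set Implicit Arguments. Unset Strict Implicit.

Definition cnt (p : pred nat) a := count p (iota 1 a).

Lemma cnt_split (p : pred nat) a b : a <= b -> cnt p b = cnt p a + count p (iota a.+1 (b - a)).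
Proof.
move=> ab; rewrite /cnt {1}(_ : b = a + (b - a)); last by lia.
by rewrite iotaD count_cat add1n.
Qed.

Lemma cntS p a : cnt p a.+1 = cnt p a + p a.+1.
Proof. by rewrite (@cnt_split p a a.+1 (leqnSn a)) subSnn /= addn0. Qed.

Lemma cnt_mono (p : pred nat) a b : a <= b -> cnt p a <= cnt p b.
Proof. by move=> ab; rewrite (@cnt_split p a b ab) leq_addr. Qed.

Lemma cnt_lt (p : pred nat) a b x : a < x <= b -> p x -> cnt p a < cnt p b.
Proof.
move=> hx px; have ab : a <= b by lia.
rewrite (@cnt_split p a b ab) -[X in X < _]addn0 ltn_add2l -has_count.
by apply/hasP; exists x => //; rewrite mem_iota; lia.
Qed.

Lemma cnt_eq (p : pred nat) a b : a <= b -> (forall x, a < x <= b -> ~~ p x) -> cnt p b = cnt p a.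
Proof.
move=> ab H; rewrite (@cnt_split p a b ab); apply/eqP; rewrite -{2}[cnt p a]addn0 eqn_add2l.
rewrite -leqn0 leqNgt -has_count; apply/hasPn => x; rewrite mem_iota => hx.
apply: H; lia.
Qed.

Lemma cnt_notin (s : seq nat) m : uniq s -> (forall x, x \in s -> 0 < x) ->
  cnt (fun x => x \notin s) m + count (fun x => x <= m) s = m.
Proof.
move=> us pos.
have E : count (fun x => x \in s) (iota 1 m) = count (fun x => x <= m) s.
  elim: s us pos => [|y s IH] /= us pos.
    by rewrite (eq_count (a2 := pred0)) // count_pred0.
  case/andP: us => ys us.
  rewrite (eq_count (a2 := predU (pred1 y) (fun x => x \in s))); last first.
    by move=> x; rewrite /= inE.
  have := count_predUI (pred1 y) (fun x => x \in s) (iota 1 m).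
  rewrite (eq_count (a1 := predI _ _) (a2 := pred0)); last first.
    by move=> x /=; apply/andP => -[/eqP -> ]; rewrite (negbTE ys).
  rewrite count_pred0 addn0 => ->.
  rewrite IH //; last by move=> x xs; apply: pos; rewrite inE xs orbT.
  rewrite count_uniq_mem ?iota_uniq // mem_iota.
  have := pos y; rewrite inE eqxx => /(_ isT) py.
  case: (leqP y m) => hy /=; lia.
have := count_predC (fun x => x \in s) (iota 1 m).
rewrite size_iota /cnt -E => H; rewrite -[X in _ = X]H addnC; by [].
Qed.

Lemma head_filter_iota (P : pred nat) a k r l :
  [seq x <- iota a k | P x] = r :: l ->
  [/\ P r, a <= r < a + k & forall x, a <= x < r -> ~~ P x].
Proof.
elim: k a => [|k IH] a //=.
case: ifP => Pa.
  case=> <- _; split => //; first lia.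
  move=> x; lia.
move/IH => [pr hr hx]; split => //; first lia.
move=> x hx'; case: (x =P a) => [->|]; first by rewrite Pa.
move=> /eqP xa; apply: hx; lia.
Qed.

Lemma head_filter_iota_eq (P : pred nat) a k r : P r -> a <= r < a + k ->
  (forall x, a <= x < r -> ~~ P x) -> head 0 [seq x <- iota a k | P x] = r.
Proof.
elim: k a => [|k IH] a pr hr hx; first lia.
rewrite /=; case: ifP => Pa.
  case: (r =P a) => [-> //|/eqP ra].
  by have := hx a; rewrite Pa; move/(_ ltac:(lia)).
case: (r =P a) => [ra|/eqP ra]; first by rewrite -ra pr in Pa.
apply: IH => //; first lia.
move=> x hx'; apply: hx; lia.
Qed.

Lemma filter_iota_nil (P : pred nat) a k :
  [seq x <- iota a k | P x] = [::] -> forall x, a <= x < a + k -> ~~ P x.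
Proof.
move=> E x hx; apply/negP => Px.
have : has P (iota a k) by apply/hasP; exists x => //; rewrite mem_iota.
by rewrite has_filter E.
Qed.

Lemma col_nil (V : seq (nat * nat)) i : i \notin map fst V ->
  [seq v <- V | v.1 == i] = [::].
Proof.
elim: V => [|v V IH] //= ; rewrite inE negb_or => /andP [h1 h2].
by rewrite eq_sym (negbTE h1) IH.
Qed.

Lemma col_val (V : seq (nat * nat)) i j : uniq (map fst V) -> (i, j) \in V ->
  [seq v.2 | v <- V & v.1 == i] = [:: j].
Proof.
elim: V => [|v V IH] //= /andP [nv uV]; rewrite inE => /orP [/eqP E|ij].
  by move: nv; rewrite -E /= => nv; rewrite eqxx col_nil.
have : v.1 != i.
  apply/eqP => E; move: nv; rewrite E; move/negP; apply.
  by apply/mapP; exists (i, j).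
by move/negbTE => ->; apply: IH.
Qed.

Lemma count_le_in (T : eqType) (q p : pred T) (s : seq T) :
  (forall v, v \in s -> q v -> p v) -> count q s <= count p s.
Proof.
elim: s => [|y s IH] //= H.
have : q y <= p y by case qy: (q y) => //; rewrite (H y) // inE eqxx.
have := IH (fun v vs => H v ltac:(by rewrite inE vs orbT)).
lia.
Qed.

Lemma count_lt_sub (T : eqType) (q p : pred T) (s : seq T) x :
  (forall v, v \in s -> q v -> p v) -> x \in s -> p x -> ~~ q x ->
  count q s < count p s.
Proof.
elim: s => [|y s IH] //= H; rewrite inE => /orP [/eqP ->|xs] px nqx.
  rewrite px (negbTE nqx) add0n add1n ltnS.
  by apply: count_le_in => v vs; apply: H; rewrite inE vs orbT.
have H' : forall v, v \in s -> q v -> p v by move=> v vs; apply: H; rewrite inE vs orbT.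
have := IH H' xs px nqx.
have : q y <= p y by case qy: (q y) => //; rewrite (H y) // inE eqxx.
lia.
Qed.

Section Spec.
Variables (n : nat) (V : seq (nat * nat)).
Hypotheses (uC : uniq (map fst V)) (uR : uniq (map snd V))
  (bV : forall v, v \in V -> 0 < v.1 < v.2 /\ v.2 <= n).
Let R := map snd V.
Let C := map fst V.
Let NR := fun x => x \notin R.
Let NC := fun x => x \notin C.

Lemma totals : cnt NR n = cnt NC n.
Proof.
have HR := @cnt_notin R n uR.
have HC := @cnt_notin C n uC.
have e1 : count (fun x => x <= n) R = size V.
  rewrite count_map -[RHS]count_predT; apply: eq_in_count => v /bV /= [_ ->] //.
have e2 : count (fun x => x <= n) C = size V.
  rewrite count_map -[RHS]count_predT; apply: eq_in_count => v /bV /= [/andP [h0 h1] h2]; exact: (leq_trans (ltnW h1) h2).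
have p1 : forall x, x \in R -> 0 < x.
  by move=> x /mapP [v /bV [/andP [h0 h1] _] ->]; exact: (leq_trans h0 (ltnW h1)).
have p2 : forall x, x \in C -> 0 < x.
  by move=> x /mapP [v /bV [/andP [h0 h1] _] ->].
apply/eqP; rewrite -(eqn_add2r (size V)) -{1}e1 -e2 /NR /NC HR // HC //.
Qed.

Definition Inv (used : seq nat) h :=
  forall x, 0 < x -> (x \in used) = (x \in R) || (x <= h).

Lemma spec m : forall s used h, s + m <= n -> Inv used h -> cnt NR h = cnt NC s ->
  forall c, s < c <= s + m ->
  exists used' h', [/\ Inv used' h', cnt NR h' = cnt NC c.-1 &
    nth 0 (bjs_aux n V (iota s.+1 m) used) (c - s.+1) =
    match [seq v.2 | v <- V & v.1 == c] with
    | r :: _ => r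
    | [::] => head 0 [seq r <- iota 1 n | r \notin used'] end].
Proof.
elim: m => [|m IH] s used h hsm hI hc c hcr; first lia.
rewrite [iota _ _]/= [bjs_aux _ _ _ _]/=.
case: (c =P s.+1) => [E|/eqP cne].
  exists used, h; split => //; first by rewrite E.
  by rewrite E subnn; case: [seq v.2 | v <- V & v.1 == s.+1].
have -> : c - s.+1 = (c - s.+2).+1 by lia.
case E: [seq v.2 | v <- V & v.1 == s.+1] => [|r0 l0] /=.
  have sC : NC s.+1.
    apply/negP => sC; move: E.
    case/mapP: sC => v vV ve.
    have vV' : (s.+1, v.2) \in V by rewrite ve -surjective_pairing.
    by rewrite (@col_val V _ _ uC vV').
  case F: [seq r <- iota 1 n | r \notin used] => [|r l] /=.
    exfalso.
    have H := filter_iota_nil F.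
    have h1 : cnt NR n <= cnt NR h.
      case: (leqP n h) => nh; first exact: cnt_mono.
      rewrite (@cnt_eq _ h n) //; first lia.
      move=> x hx; have := H x ltac:(lia); rewrite negbK hI; last lia.
      rewrite /NR negbK; case/orP => // ; lia.
    have h2 : cnt NC s.+1 <= cnt NC n by apply: cnt_mono; lia.
    move: h1 h2; rewrite cntS sC totals hc; lia.
  have [Pr hr hx] := head_filter_iota F.
  have rpos : 0 < r by lia.
  move: Pr; rewrite hI // negb_or -ltnNge => /andP [rR hr'].
  apply: (IH s.+1 (r :: used) r); [lia| | |lia].
    move=> x xpos; rewrite inE hI //.
    case: (x =P r) => [->|/eqP xr] /=; first by rewrite leqnn orbT.
    case: (leqP x h) => xh; first by rewrite orbT (leq_trans xh (ltnW hr')) orbT.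
    rewrite orbF; case: (leqP x r) => xr'; last by rewrite orbF.
    rewrite orbT; have := hx x ltac:(lia); rewrite negbK hI // leqNgt xh orbF.
    by move=> ->.
  rewrite cntS sC -hc (@cnt_split _ h r) ?(ltnW hr') //.
  congr (_ + _).
  have -> : r - h = (r - h).-1 + 1 by lia.
  rewrite iotaD count_cat /= addn0 (_ : h.+1 + (r - h).-1 = r); last by lia.
  rewrite /NR rR addn1; congr (_.+1).
  apply/eqP; rewrite -leqn0 leqNgt -has_count; apply/hasPn => x; rewrite mem_iota => hx'.
  have := hx x ltac:(lia); rewrite negbK hI; last lia.
  rewrite /NR negbK; case/orP => //; lia.
have sC : ~~ NC s.+1.
  rewrite /NC negbK; apply/mapP; move: E.
  elim: (V) => [|v V' IHV] //=; case: ifP => [/eqP e _|_ /IHV [w wV we]].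
    by exists v; rewrite ?inE ?eqxx.
  by exists w; rewrite ?inE ?wV ?orbT.
apply: IH; [lia|exact: hI| |lia].
by rewrite cntS (negbTE sC) addn0.
Qed.

Lemma abstract k : 1 <= k <= n ->
  nth 0 (bjs_aux n V (iota 1 n) R) k.-1 = k <->
  (forall i j : nat, (i, j) \in V -> ~ (i <= k /\ k <= j)).
Proof.
move=> /andP [k1 kn].
have [used' [h' [hI hc E]]] := @spec n 0 R 0 ltac:(lia)
  ltac:(by move=> x xp; rewrite leqNgt xp orbF) erefl k ltac:(lia).
rewrite subn1 in E; rewrite E.
case: (boolP (k \in C)) => kC.
  case/mapP: kC => v vV kv.
  have vV' : (k, v.2) \in V by rewrite kv -surjective_pairing.
  have [/andP [_ kj] _] := bV vV'.
  rewrite (@col_val V _ _ uC vV') /=; split.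
    move=> e; rewrite e ltnn in kj; by [].
  by move=> H; exfalso; apply: (H _ _ vV'); split => //; apply: ltnW.
rewrite (col_nil kC).
have cR : cnt NR k.-1 + count (fun v : nat * nat => v.2 <= k.-1) V = k.-1.
  rewrite -(count_map snd (fun x => x <= k.-1)).
  apply: (@cnt_notin R k.-1 uR)
  ltac:(by move=> x /mapP [v /bV [/andP [h0 h1] _] ->]; exact: (leq_trans h0 (ltnW h1))).
have cC : cnt NC k.-1 + count (fun v : nat * nat => v.1 <= k.-1) V = k.-1.
  rewrite -(count_map fst (fun x => x <= k.-1)).
  apply: (@cnt_notin C k.-1 uC)
  ltac:(by move=> x /mapP [v /bV [/andP [h0 h1] _] ->]).
have sub : forall v, v \in V -> v.2 <= k.-1 -> v.1 <= k.-1.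
  move=> v /bV [/andP [_ h1] _] h2; exact: leq_trans (ltnW h1) h2.
split.
  case F: [seq r <- iota 1 n | r \notin used'] => [|r l] /=; first lia.
  move=> rk; rewrite rk in F.
  have [Pk _ hx] := head_filter_iota F.
  move: Pk; rewrite hI; last lia.
  rewrite negb_or -ltnNge => /andP [kR hk].
  have e1 : cnt NR k.-1 = cnt NR h'.
    apply: cnt_eq; first lia.
    move=> x hx'; have := hx x ltac:(lia); rewrite negbK hI; last lia.
    rewrite /NR negbK; case/orP => //; lia.
  move=> i j ij [ik kj].
  have ik' : i != k.
    apply/eqP => e; move: kC; rewrite -e; move/negP; apply.
    by apply/mapP; exists (i, j).
  have jk' : j != k.
    apply/eqP => e; move: kR; rewrite -e; move/negP; apply.
    by apply/mapP; exists (i, j).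
  have := @count_lt_sub _ (fun v : nat * nat => v.2 <= k.-1)
    (fun v : nat * nat => v.1 <= k.-1) V (i, j) sub ij.
  rewrite /=; move=> /(_ ltac:(lia)) /(_ ltac:(lia)).
  lia.
move=> H.
have kR : k \notin R.
  apply/negP => /mapP [[a b] vV /= kv].
  have [/andP [_ h1] _] := bV vV.
  apply: (H a b vV); rewrite /= in h1; split; lia.
have ceq : count (fun v : nat * nat => v.1 <= k.-1) V =
           count (fun v : nat * nat => v.2 <= k.-1) V.
  apply: eq_in_count => -[a b] vV; apply/idP/idP; last exact: (sub (a, b)).
  rewrite /= => h1; rewrite leqNgt; apply/negP => h2.
  apply: (H a b vV); split; lia.
have e2 : cnt NR k.-1 = cnt NR h'.
  rewrite ceq in cC; lia.
have hk : h' < k.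
  rewrite ltnNge; apply/negP => kh.
  have := @cnt_lt NR k.-1 h' k ltac:(lia) kR.
  rewrite e2; lia.
apply: head_filter_iota_eq.
- by rewrite hI; [rewrite negb_or kR -ltnNge hk | lia].
- lia.
move=> x hx; rewrite negbK hI; last lia.
case: (leqP x h') => xh; first by rewrite orbT.
rewrite orbF; apply/negPn/negP => xR.
have := @cnt_lt NR h' k.-1 x ltac:(lia) xR.
rewrite e2; lia.
Qed.

End Spec.

Lemma count_take_mono (a : pred bool) (s : seq bool) p q : p <= q ->
  count a (take p s) <= count a (take q s).
Proof.
move=> pq; rewrite -(take_takel s pq).
by rewrite -[in X in _ <= X](cat_take_drop p (take q s)) count_cat leq_addr.
Qed.

Lemma count_take_lt (a : pred bool) x0 (s : seq bool) p q : p < q -> q < size s ->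
  a (nth x0 s q) -> count a (take p.+1 s) < count a (take q.+1 s).
Proof.
move=> pq qs aq; rewrite (take_nth x0 qs) -cats1 count_cat /= aq addn0 addn1 ltnS.
exact: count_take_mono.
Qed.

Lemma valleys_prop n D : dyck n D ->
  [/\ uniq (map fst (valleys D)), uniq (map snd (valleys D)) &
   forall v, v \in valleys D -> 0 < v.1 < v.2 /\ v.2 <= n].
Proof.
case/and3P => /eqP sD /eqP cD /allP pD.
set P := fun p => (nth true D p == false) && (nth false D p.+1 == true).
have inF : forall p, p \in [seq p <- iota 0 (size D).-1 | P p] ->
    [/\ p.+1 < size D, nth true D p = false & nth false D p.+1 = true].
  move=> p; rewrite mem_filter mem_iota => /andP [/andP [/eqP h1 /eqP h2] h3].
  split => //; lia.
have lt1 : forall p q, p \in [seq p <- iota 0 (size D).-1 | P p] ->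
    q \in [seq p <- iota 0 (size D).-1 | P p] -> p < q ->
    count negb (take p.+1 D) < count negb (take q.+1 D) /\
    count id (take p.+2 D) < count id (take q.+2 D).
  move=> p q /inF [p1 p2 p3] /inF [q1 q2 q3] pq; split.
    by apply: (@count_take_lt negb true) => //; [lia | rewrite q2].
  by apply: (@count_take_lt id false D p.+1 q.+1) => //; rewrite q3.
split.
- rewrite /valleys -map_comp map_inj_in_uniq ?filter_uniq ?iota_uniq //.
  move=> p q hp hq /= e; case: (ltngtP p q) => // pq.
    by have [h _] := lt1 _ _ hp hq pq; rewrite e ltnn in h.
  by have [h _] := lt1 _ _ hq hp pq; rewrite e ltnn in h.
- rewrite /valleys -map_comp map_inj_in_uniq ?filter_uniq ?iota_uniq //.
  move=> p q hp hq /= e; case: (ltngtP p q) => // pq.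
    by have [_ h] := lt1 _ _ hp hq pq; rewrite e ltnn in h.
  by have [_ h] := lt1 _ _ hq hp pq; rewrite e ltnn in h.
move=> v /mapP [p /inF [p1 p2 p3] ->] /=.
have ps : p < size D by lia.
split; last first.
  rewrite -cD -[in X in _ <= X](cat_take_drop p.+2 D) count_cat; exact: leq_addr.
apply/andP; split.
  by rewrite (take_nth true ps) -cats1 count_cat /= p2 addn1.
rewrite (take_nth false p1) -cats1 count_cat /= addn0 p3 addn1 ltnS.
have := pD p.+1; rewrite mem_iota; apply; lia.
Qed.

Theorem mainTheorem2 (n : nat) (D : seq bool) (hD : dyck n D) (k : nat)
    (hk1 : 1 <= k) (hkn : k <= n) :
  bjs_perm n D k = k <->
  (forall i j : nat, (i, j) \in valleys D -> ~ (i <= k /\ k <= j)).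
Proof.
have [uC uR bV] := valleys_prop hD.
rewrite /bjs_perm /bjs.
apply: (abstract uC uR bV); lia.
Qed.
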